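(* Let $\mathcal{B}$ be an algebra in a functional language $\mathcal{L}$ and let $\Lambda^{\mathcal{B}}$ be the direct system of formulas associated with $\mathcal{B}$ (described in the context). Then $L(\Lambda^{\mathcal{B}})\cong\mathcal{B}$.
   Context: Functional language: operation symbols $F$ (arity $n_F$) and constants only. A diagram-formula in a finite reduct $\mathcal{L}'$ in finite variables $X$ is a conjunction of atomic formulas and negations such that $\neg(x=y)$ is a conjunct for distinct $x,y\in X$, for each $F\in\mathcal{L}'$ and $(x_0,\dots,x_{n_F})\in X^{n_F+1}$ exactly one of $F(x_1,\dots,x_{n_F})=x_0$ and its negation is a conjunct, and for each constant $c\in\mathcal{L}'$ and $x\in X$ exactly one of $x=c$, $\neg(x=c)$ is a conjunct. A direct system of formulas $\Lambda=(I,\varphi_i,\gamma_{ij})$: $(I,\le)$ directed; $\varphi_i$ consistent diagram-formulas in finite reducts $\mathcal{L}_i$ and finite variables $X_i$; maps $\gamma_{ij}:X_i\to X_j$ ($i\le j$) with $\gamma_{ii}=\mathrm{id}$, $\gamma_{jk}\gamma_{ij}=\gamma_{ik}$, conjuncts of $\varphi_i(\gamma_{ij}(X_i))$ are conjuncts of $\varphi_j$; every constant appears in a conjunct $x=c$ of some $\varphi_i$; for all $F,i,(x_1,\dots,x_{n_F})\in X_i^{n_F}$ some $j\ge i$ has a conjunct $F(\gamma_{ij}(x_1),\dots)=x_j$. Its limit algebra $L(\Lambda)$ has universe $\{(x,i):x\in X_i\}/\!\equiv$, $(x,i)\equiv(y,j)$ iff $\gamma_{ik}(x)=\gamma_{jk}(y)$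 for some $k\ge i,j$, with constants/operations read off from the conjuncts $x=c$ and $F(\dots)=x_j$. The system $\Lambda^{\mathcal{B}}$: take variables $X=\{x_b:b\in B\}$; $I$ is the set of pairs $(\mathcal{L}',X')$ with $\mathcal{L}'$ a finite reduct of $\mathcal{L}$ and $X'$ a finite subset of $X$, ordered by $(\mathcal{L}',X')\le(\mathcal{L}'',X'')$ iff $\mathcal{L}'\subseteq\mathcal{L}''$ and $X'\subseteq X''$; $\varphi_{(\mathcal{L}',X')}$ is the diagram-formula in $\mathcal{L}'$ and $X'$ consisting of exactly those conjuncts (among $x_b\ne x_{b'}$, $x_b=c$ or its negation, $F(x_{b_1},\dots,x_{b_{n_F}})=x_{b_0}$ or its negation, for $c,F\in\mathcal{L}'$ and variables in $X'$) that are true in $\mathcal{B}$ under $x_b\mapsto b$; all maps $\gamma$ are inclusions $x_b\mapsto x_b$. This is a direct system of formulas. *)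

(* Defs.v *)
From mathcomp Require Import all_boot.
Set Implicit Arguments. Unset Strict Implicit. Unset Printing Implicit Defensive.

Record language := Language {
  Fsym : Type;
  arity : Fsym -> nat;
  Csym : Type
}.

Record algebra (L : language) := Algebra {
  carrier :> Type;
  cst : Csym L -> carrier;
  op : forall F : Fsym L, ('I_(arity F) -> carrier) -> carrier
}.

(* Literals that may occur as conjuncts of a diagram-formula over variables V:
   ~(x = y), x = c, ~(x = c), F(x_1..x_n) = x_0, ~(F(x_1..x_n) = x_0). *)
Inductive lit (L : language) (V : Type) :=
| LNeqV (x y : V)
| LEqC (x : V) (c : Csym L)
| LNeqC (x : V) (c : Csym L)
| LEqF (F : Fsym L) (xs : 'I_(arity F) -> V) (x0 : V)
| LNeqF (F : Fsym L) (xs : 'I_(arity F) -> V) (x0 : V).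

(* A system of formulas (the data (I, <=, X_i, phi_i, gamma_ij)); a formula
   phi_i is represented by the set of its conjuncts. gamma_ij is given for
   i <= j. *)
Record fsystem (L : language) := FSystem {
  idx : Type;
  ile : idx -> idx -> Prop;
  var : idx -> Type;
  phi : forall i, lit L (var i) -> Prop;
  gam : forall i j, ile i j -> var i -> var j
}.

Definition lelem L (S : fsystem L) := {i : idx S & var i}.

Definition lequiv L (S : fsystem L) (u v : lelem S) : Prop :=
  exists k (hu : ile (projT1 u) k) (hv : ile (projT1 v) k),
    gam hu (projT2 u) = gam hv (projT2 v).

(* universe of L(Lambda): equivalence classes of pairs (x, i) *)
Definition lcarrier L (S : fsystem L) :=
  {P : lelem S -> Prop | exists u, P = lequiv u}.

Definition lcls L (S : fsystem L) (u : lelem S) : lcarrier S :=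
  exist _ (lequiv u) (ex_intro _ u erefl).

Definition lcst L (S : fsystem L) (c : Csym L) (a : lcarrier S) : Prop :=
  exists i (x : var i), phi (LEqC x c) /\ a = lcls (existT _ i x).

Definition lop L (S : fsystem L) (F : Fsym L)
    (args : 'I_(arity F) -> lcarrier S) (a0 : lcarrier S) : Prop :=
  exists j (xs : 'I_(arity F) -> var j) (x0 : var j),
    phi (LEqF xs x0) /\ (forall k, args k = lcls (existT _ j (xs k)))
    /\ a0 = lcls (existT _ j x0).

Definition limit_iso L (S : fsystem L) (B : algebra L) : Prop :=
  exists h : lcarrier S -> B,
    bijective h /\
    (forall c a, @lcst L S c a <-> h a = @cst L B c) /\
    (forall F args a0, @lop L S F args a0 <-> h a0 = @op L B F (fun k => h (args k))).

Definition finite_pred (T : Type) (P : T -> Prop) : Prop :=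
  exists n (e : 'I_n -> T), forall x, P x -> exists k, e k = x.

Definition fsub (T : Type) := {P : T -> Prop | finite_pred P}.

(* index set of Lambda^B: pairs (L', X') with L' a finite reduct and X' a
   finite set of variables x_b (variable x_b is identified with b). *)
Definition BIdx L (B : algebra L) :=
  (fsub (Fsym L) * fsub (Csym L) * fsub B)%type.

Definition BF L (B : algebra L) (i : BIdx B) := sval i.1.1.
Definition BC L (B : algebra L) (i : BIdx B) := sval i.1.2.
Definition BX L (B : algebra L) (i : BIdx B) := sval i.2.

Definition Ble L (B : algebra L) (i j : BIdx B) : Prop :=
  [/\ forall F, BF i F -> BF j F,
      forall c, BC i c -> BC j c &
      forall b, BX i b -> BX j b].

Definition Bvar L (B : algebra L) (i : BIdx B) := {b : B | BX i b}.

Definition Bphi L (B : algebra L) (i : BIdx B) (l : lit L (Bvar i)) : Prop :=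
  match l with
  | LNeqV x y => sval x <> sval y
  | LEqC x c => BC i c /\ sval x = @cst L B c
  | LNeqC x c => BC i c /\ sval x <> @cst L B c
  | LEqF F xs x0 => BF i F /\ @op L B F (fun k => sval (xs k)) = sval x0
  | LNeqF F xs x0 => BF i F /\ @op L B F (fun k => sval (xs k)) <> sval x0
  end.

Definition Bgam L (B : algebra L) (i j : BIdx B) (h : Ble i j)
    (x : Bvar i) : Bvar j :=
  let: And3 _ _ hX := h in exist _ (sval x) (hX _ (svalP x)).

Definition LambdaB L (B : algebra L) : fsystem L :=
  @FSystem L (BIdx B) (@Ble L B) (@Bvar L B) (@Bphi L B) (@Bgam L B).

(* Main.v *)
From Stdlib Require Import ProofIrrelevance FunctionalExtensionality PropExtensionality ClassicalEpsilon.
Require Import Defs.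
From mathcomp Require Import all_boot.

Section S.
Variable (L : language) (B : algebra L).

Definition fs0 (T : Type) : fsub T.
Proof. exists (fun _ => False). exists 0, (fun k : 'I_0 => False_rect T (notF (ltn_ord k))).
  by move=> x []. Defined.

Definition fs1 (T : Type) (a : T) : fsub T.
Proof. exists (fun y => y = a). exists 1, (fun _ => a). move=> x ->; by exists ord0. Defined.

Definition fsimg (T : Type) n (e : 'I_n -> T) : fsub T.
Proof. exists (fun y => exists k, e k = y). by exists n, e. Defined.

Definition fsU (T : Type) (A1 A2 : fsub T) : fsub T.
Proof.
  exists (fun y => sval A1 y \/ sval A2 y).
  case: A1 => P1 [n1 [e1 H1]]; case: A2 => P2 [n2 [e2 H2]] /=.
  exists (n1 + n2), (fun k => match split k with inl a => e1 a | inr b => e2 b end).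
  move=> x [/H1 [k <-]|/H2 [k <-]].
  - exists (lshift n2 k). by rewrite -[lshift n2 k]/(unsplit (inl k)) unsplitK.
  - exists (rshift n1 k). by rewrite -[rshift n1 k]/(unsplit (inr k)) unsplitK.
Defined.

Definition join (i j : BIdx B) : BIdx B :=
  (@fsU _ i.1.1 j.1.1, @fsU _ i.1.2 j.1.2, @fsU _ i.2 j.2).

Lemma le_joinl i j : Ble i (join i j).
Proof. split=> x H; by left. Qed.
Lemma le_joinr i j : Ble j (join i j).
Proof. split=> x H; by right. Qed.

Definition valB (u : lelem (LambdaB B)) : B := proj1_sig (projT2 u : Bvar (projT1 u)).

Lemma exist_eq (T : Type) (P : T -> Prop) b1 b2 (p1 : P b1) (p2 : P b2) :
  b1 = b2 -> exist P b1 p1 = exist P b2 p2.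
Proof. move=> E; subst; f_equal; apply proof_irrelevance. Qed.

Lemma lequivP u v : lequiv u v <-> valB u = valB v.
Proof.
  split.
  - move=> [k [hu [hv E]]]. move: E => /=. rewrite /Bgam.
    case: hu => ? ? ?; case: hv => ? ? ? E.
    exact: (f_equal (@proj1_sig _ _) E).
  - move=> E. exists (join (projT1 u) (projT1 v)), (le_joinl _ _), (le_joinr _ _).
    rewrite /= /Bgam. case: (le_joinl _ _) => ???; case: (le_joinr _ _) => ???.
    exact: exist_eq.
Qed.

Lemma lcls_eq u v : lcls u = lcls v <-> valB u = valB v.
Proof.
  split.
  - move=> E. have E2 := f_equal (@proj1_sig _ _) E. simpl in E2.
    apply/lequivP. rewrite E2. by apply/lequivP.
  - move=> E. apply: exist_eq. apply: functional_extensionality => w.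
    apply: propositional_extensionality.
    rewrite !lequivP E; tauto.
Qed.

Definition hh (a : lcarrier (LambdaB B)) : B :=
  valB (proj1_sig (constructive_indefinite_description _ (proj2_sig a))).

Lemma hE u : hh (lcls u) = valB u.
Proof.
  rewrite /hh. case: constructive_indefinite_description => w /= Hw.
  have H : lequiv w w by apply/lequivP.
  rewrite -Hw in H. by move/lequivP: H.
Qed.

Lemma lclsE (a : lcarrier (LambdaB B)) : exists u, a = lcls u.
Proof. case: a => P [u E]; exists u; exact: exist_eq. Qed.

Definition mk (f : fsub (Fsym L)) (c : fsub (Csym L)) (x : fsub B) : BIdx B := (f, c, x).

Definition gg (b : B) : lcarrier (LambdaB B) :=
  @lcls L (LambdaB B) (existT (fun i : BIdx B => Bvar i) (mk (fs0 _) (fs0 _) (@fs1 _ b))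
               (exist _ b erefl)).

Theorem main : limit_iso (LambdaB B) B.
Proof.
  exists hh. split; [|split].
  - exists gg.
    + move=> a. case: (lclsE a) => u ->. rewrite hE /gg. by apply/lcls_eq.
    + move=> b. by rewrite /gg hE.
  - move=> c a; split.
    + move=> [i [x [[_ Hx] ->]]]. by rewrite hE.
    + case: (lclsE a) => u -> E. rewrite hE in E.
      exists (mk (fs0 _) (@fs1 _ c) (@fs1 _ (valB u))).
      exists (exist (fun y => y = valB u) (valB u) erefl). split; first by split.
      by apply/lcls_eq.
  - move=> F args a0; split.
    + move=> [j [xs [x0 [[_ Hx] [Ha ->]]]]]. rewrite hE /valB /= -Hx. f_equal.
      apply: functional_extensionality => k. by rewrite Ha hE.
    + move=> E.
      pose X := @fsU _ (@fs1 _ (hh a0)) (@fsimg _ _ (fun k => hh (args k))).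
      exists (mk (@fs1 _ F) (fs0 _) X).
      exists (fun k => exist (fun y => sval X y) (hh (args k)) (or_intror (ex_intro _ k erefl))).
      exists (exist (fun y => sval X y) (hh a0) (or_introl erefl)).
      split; first by split.
      split.
      * move=> k. case: (lclsE (args k)) => u Eu. rewrite {1}Eu. apply/lcls_eq.
        by rewrite /valB /= Eu hE.
      * case: (lclsE a0) => u Eu. rewrite {1}Eu. apply/lcls_eq.
        by rewrite /valB /= Eu hE.
Qed.
End S.

Theorem mainTheorem12 (L : language) (B : algebra L) :
  limit_iso (LambdaB B) B.
Proof. exact: main. Qed.
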